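(* Let $(\mathcal{X},\|\cdot\|)$ be a real Banach space, $P$ a probability distribution on a measurable space $\mathcal{E}$, and $Q,P_e:\mathcal{X}\to\mathcal{X}$ with $\|Q(\theta_1)-Q(\theta_2)\|\le\rho\|\theta_1-\theta_2\|$ ($\rho\in[0,1)$, $\theta^\star$ the unique fixed point of $Q$), $\|P_e(\theta_1)-P_e(\theta_2)\|\le L\|\theta_1-\theta_2\|$ for all $e$ ($L\ge0$), and $\mathbb{E}_{e\sim P}[\|P_e(\theta^\star)-\theta^\star\|]\le\sigma$ for some $\sigma\ge0$. Assume $\gamma:=\rho L>0$. Then for every $\theta\in\mathcal{X}$, \[\|\theta-\theta^\star\|\ge\frac{1}{2\rho L}\Big(\mathbb{E}_e[\Omega(\theta;e)]-(1+\rho)\sigma\Big)_+.\] If moreover $\pi:\mathcal{X}\to\mathcal{Z}$ and $\ell:\mathcal{Z}\to\mathbb{R}$ satisfy $\ell(\pi(\theta))-\ell(\pi(\theta^\star))\ge\frac{m_{\mathrm{QG}}}{2}\|\theta-\theta^\star\|^2$ for all $\theta$ with some $m_{\mathrm{QG}}>0$, then for every $\theta\in\mathcal{X}$, \[\ell(\pi(\theta))-\ell(\pi(\theta^\star))\ge\frac{m_{\mathrm{QG}}}{8\rho^2L^2}\Big(\mathbb{E}_e[\Omega(\theta;e)]-(1+\rho)\sigma\Big)_+^2.\]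
   Context: The order-gap is $\Omega(\theta;e):=\|Q(P_e(\theta))-P_e(Q(\theta))\|$, expectation over $e\sim P$; $(x)_+=\max(x,0)$. $\pi$ is a decision map into a set $\mathcal{Z}$ and $\ell$ a loss. *)

(* Defs.v *)
From HB Require Import structures.
From mathcomp Require Import all_boot all_order all_algebra.
From mathcomp Require Import all_classical all_reals all_analysis.
Set Implicit Arguments. Unset Strict Implicit. Unset Printing Implicit Defensive.
Import Order.TTheory GRing.Theory Num.Theory.
Import numFieldNormedType.Exports.
Local Open Scope ring_scope.

Definition order_gap (R : realType) (X : normedModType R) (E : Type)
  (Q : X -> X) (Pe : E -> X -> X) (theta : X) (e : E) : R :=
  `| Q (Pe e theta) - Pe e (Q theta) |.

Definition expected_gap (R : realType) (X : normedModType R)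
  (d : measure_display) (T : measurableType d) (P : probability T R)
  (Q : X -> X) (Pe : T -> X -> X) (theta : X) : R :=
  Rintegral P setT (order_gap Q Pe theta).

Definition pos_part (R : realType) (x : R) : R := Num.max x 0.

(* Main.v *)
Require Import Defs.
From HB Require Import structures.
From mathcomp Require Import all_boot all_order all_algebra.
From mathcomp Require Import all_classical all_reals all_analysis.
From mathcomp Require Import ring lra measurable_realfun.
Import Order.TTheory GRing.Theory Num.Theory.
Import numFieldNormedType.Exports.
Local Open Scope ring_scope.

Theorem proposition4p14 (R : realType) (X : completeNormedModType R)
  (d : measure_display) (E : measurableType d) (P : probability E R)
  (Q : X -> X) (Pe : E -> X -> X) (rho L sigma : R) (theta_star : X)
  (Z : Type) (pi : X -> Z) (ell : Z -> R) (mQG : R) :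
  0 <= rho -> rho < 1 ->
  (forall t1 t2 : X, `|Q t1 - Q t2| <= rho * `|t1 - t2|) ->
  Q theta_star = theta_star ->
  0 <= L ->
  (forall (e : E) (t1 t2 : X), `|Pe e t1 - Pe e t2| <= L * `|t1 - t2|) ->
  0 <= sigma ->
  measurable_fun setT (fun e : E => `|Pe e theta_star - theta_star|) ->
  (\int[P]_(e in setT) (`|Pe e theta_star - theta_star|)%:E <= sigma%:E)%E ->
  (forall theta : X, P.-integrable setT (fun e => (order_gap Q Pe theta e)%:E)) ->
  0 < rho * L ->
  (forall theta : X,
     `|theta - theta_star| >=
       (2 * rho * L)^-1 *
         pos_part (expected_gap P Q Pe theta - (1 + rho) * sigma))
  /\
  (0 < mQG ->
   (forall theta : X,
      ell (pi theta) - ell (pi theta_star) >= mQG / 2 * `|theta - theta_star| ^+ 2) ->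
   forall theta : X,
     ell (pi theta) - ell (pi theta_star) >=
       mQG / (8 * rho ^+ 2 * L ^+ 2) *
         pos_part (expected_gap P Q Pe theta - (1 + rho) * sigma) ^+ 2).
Proof.
move=> rho0 rho1 HQ HQs L0 HP sig0 ms Hs Hint rL0.
set pp := fun theta => pos_part (expected_gap P Q Pe theta - (1 + rho) * sigma).
have key : forall theta, pp theta <= 2 * rho * L * `|theta - theta_star|.
  move=> theta.
  set D := `|theta - theta_star|.
  have D0 : 0 <= D by rewrite /D normr_ge0.
  have pw : forall e, order_gap Q Pe theta e <=
      2 * rho * L * D + (1 + rho) * `|Pe e theta_star - theta_star|.
    move=> e; rewrite /order_gap.
    set s := `|Pe e theta_star - theta_star|.
    have e1 : Q (Pe e theta) - Pe e (Q theta) =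
      (Q (Pe e theta) - Q (Pe e theta_star)) + (Q (Pe e theta_star) - Q theta_star)
      + (theta_star - Pe e theta_star) + (Pe e theta_star - Pe e (Q theta)).
      by rewrite HQs !addrA !subrK.
    rewrite e1.
    have h1 : `|Q (Pe e theta) - Q (Pe e theta_star)| <= rho * (L * D).
      apply: (le_trans (HQ _ _)); apply: ler_wpM2l => //; exact: HP.
    have h2 : `|Q (Pe e theta_star) - Q theta_star| <= rho * s.
      exact: HQ.
    have h3 : `|theta_star - Pe e theta_star| = s by rewrite distrC.
    have h4 : `|Pe e theta_star - Pe e (Q theta)| <= L * (rho * D).
      apply: (le_trans (HP _ _ _)); apply: ler_wpM2l => //.
      by rewrite -{1}HQs distrC; apply: HQ.
    set a1 := Q (Pe e theta) - Q (Pe e theta_star).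
    set a2 := Q (Pe e theta_star) - Q theta_star.
    set a3 := theta_star - Pe e theta_star.
    set a4 := Pe e theta_star - Pe e (Q theta).
    have t1 := ler_normD (a1 + a2 + a3) a4.
    have t2 := ler_normD (a1 + a2) a3.
    have t3 := ler_normD a1 a2.
    have r0 : 0 <= rho * L * D by rewrite mulr_ge0 // mulr_ge0.
    nra.
  have sge : forall e, 0 <= `|Pe e theta_star - theta_star| by move=> e; exact: normr_ge0.
  have mS : measurable_fun [set: E] (fun e => ((`|Pe e theta_star - theta_star| : R))%:E : \bar R).
    exact/measurable_EFinP.
  have Gle : expected_gap P Q Pe theta <= 2 * rho * L * D + (1 + rho) * sigma.
    rewrite -lee_fin /expected_gap /Rintegral fineK; last exact: integrable_fin_num.
    have c0 : 0 <= 2 * rho * L * D by rewrite !mulr_ge0.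
    have k0 : 0 <= 1 + rho by rewrite addr_ge0.
    have mS2 : measurable_fun [set: E]
       (fun e => ((1 + rho)%:E * (`|Pe e theta_star - theta_star|)%:E)%E).
      exact: measurable_funeM.
    have I1 : (\int[P]_(e in setT) (order_gap Q Pe theta e)%:E <=
      \int[P]_(e in setT) ((2 * rho * L * D)%:E + (1 + rho)%:E * (`|Pe e theta_star - theta_star|)%:E))%E.
      apply: ge0_le_integral => //.
      - by move=> e _ /=; rewrite lee_fin; exact: normr_ge0.
      - exact: (measurable_int _ (Hint theta)).
      - apply: emeasurable_funD => //; exact: measurable_cst.
      - by move=> e _; rewrite -EFinM -EFinD lee_fin.
    apply: (le_trans I1).
    rewrite ge0_integralD //; try (by move=> e _; apply: mule_ge0; rewrite lee_fin);
      try (by move=> e _; rewrite lee_fin); try exact: measurable_cst.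
    rewrite integral_cst //= probability_setT mule1 ge0_integralZl //; try (by rewrite lee_fin);
      try (by move=> e _; rewrite lee_fin); try exact/measurable_EFinP.
    have k0E : (0 <= (1 + rho)%:E)%E by rewrite lee_fin.
    have h := lee_wpmul2l k0E Hs.
    rewrite EFinD EFinM; exact: (leeD (lexx _) h).
  rewrite /pp /pos_part ge_max; apply/andP; split; first by rewrite lerBlDr.
  by rewrite !mulr_ge0 // ltW.
have key2 : forall theta, (2 * rho * L)^-1 * pp theta <= `|theta - theta_star|.
  move=> theta; have p2 : 0 < 2 * rho * L by rewrite -mulrA mulr_gt0.
  by rewrite ler_pdivrMl // ; apply: key.
split => // m0 Hell theta.
apply: le_trans (Hell theta).
have p2 : 0 < 2 * rho * L by rewrite -mulrA mulr_gt0.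
have pp0 : 0 <= pp theta by rewrite /pp /pos_part le_max lexx orbT.
have := key2 theta => k.
have k2 : ((2 * rho * L)^-1 * pp theta) ^+ 2 <= `|theta - theta_star| ^+ 2.
  have a0 : 0 <= (2 * rho * L)^-1 * pp theta by rewrite mulr_ge0 // invr_ge0 ltW.
  by rewrite !expr2; apply: ler_pM.
have -> : mQG / (8 * rho ^+ 2 * L ^+ 2) * pp theta ^+ 2 =
   mQG / 2 * ((2 * rho * L)^-1 * pp theta) ^+ 2.
  have r0 : rho != 0 by apply/negP => /eqP h; move: rL0; rewrite h mul0r ltxx.
  have l0 : L != 0 by apply/negP => /eqP h; move: rL0; rewrite h mulr0 ltxx.
  by field; rewrite r0 l0 /=.
apply: ler_wpM2l => //; by rewrite divr_ge0 // ltW.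
Qed.
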